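(* Let $f:X\to X$ be a piecewise contracting map on a compact, locally connected metric space $(X,d)$, with discontinuity set $\Delta$ and attractor $\Lambda$. If $\Delta=\emptyset$ or $d(\Lambda,\Delta)\neq0$, then $\Lambda$ is a finite union of periodic orbits of $f$.
   Context: A map $f:X\to X$ on a compact, locally connected metric space $(X,d)$ is piecewise contracting if there are $N\ge2$ non-empty, pairwise disjoint open sets $X_1,\dots,X_N$ with $X=\bigcup_i\overline{X_i}$, a constant $\lambda\in(0,1)$ with $d(f(x),f(y))\le\lambda d(x,y)$ for all $x,y$ in the same $X_i$, and such that $\tilde X:=\bigcap_{n\ge0}f^{-n}(X\setminus\Delta)\neq\emptyset$, where $\Delta:=X\setminus\bigcup_iX_i$ ($f$ is arbitrary on $\Delta$). For $A\subset X$ let $F_i(A):=\overline{f(A\cap X_i)}$; an atom of generation $n\ge1$ is a set $F_{i_n}\circ\cdots\circ F_{i_1}(X)$ with $i_1,\dots,i_n\in\{1,\dots,N\}$; $\Lambda_n$ is the union of all atoms of generation $n$ and the attractor is $\Lambda:=\bigcap_{n\ge1}\Lambda_n$. *)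

(* Defs.v *)
From HB Require Import structures.
From mathcomp Require Import all_boot all_order all_algebra.
From mathcomp Require Import all_classical all_reals all_analysis.
Set Implicit Arguments. Unset Strict Implicit. Unset Printing Implicit Defensive.
Import Order.TTheory GRing.Theory Num.Theory.
Local Open Scope classical_set_scope.
Local Open Scope ring_scope.

Definition locally_connected (T : topologicalType) :=
  forall (x : T) (U : set T), nbhs x U ->
    exists V : set T, [/\ open V, connected V, V x & V `<=` U].

Section PC.
Context {R : realType} {X : metricType R} (N : nat)
  (Xi : 'I_N -> set X) (f : X -> X).

Definition Delta : set X := ~` (\bigcup_(i in [set: 'I_N]) Xi i).

Definition Xtilde : set X := [set x | forall n : nat, ~ Delta (iter n f x)].

Definition Fmap (i : 'I_N) (A : set X) : set X := closure (f @` (A `&` Xi i)).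

(* atom F_{i_n} o ... o F_{i_1} (X) for s = [:: i_1; ...; i_n] *)
Definition atom (s : seq 'I_N) : set X := foldl (fun A i => Fmap i A) setT s.

Definition Lambda_n (n : nat) : set X :=
  \bigcup_(s in [set s : seq 'I_N | size s = n]) atom s.

Definition attractor : set X := \bigcap_(n in [set n : nat | (0 < n)%N]) Lambda_n n.

End PC.

Definition piecewise_contracting {R : realType} {X : metricType R} (N : nat)
  (Xi : 'I_N -> set X) (f : X -> X) (lambda : R) : Prop :=
  (2 <= N)%N /\
  (forall i, Xi i !=set0) /\
  (forall i, open (Xi i)) /\
  (forall i j, i != j -> Xi i `&` Xi j = set0) /\
  \bigcup_(i in [set: 'I_N]) closure (Xi i) = [set: X] /\
  (0 < lambda < 1) /\
  (forall i x y, Xi i x -> Xi i y -> mdist (f x) (f y) <= lambda * mdist x y) /\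
  Xtilde Xi f !=set0.

Definition set_dist {R : realType} {X : metricType R} (A B : set X) : R :=
  inf [set mdist x y | x in A & y in B].

Definition periodic_pt {X : Type} (f : X -> X) (p : X) : Prop :=
  exists k : nat, (0 < k)%N /\ iter k f p = p.

Definition fwd_orbit {X : Type} (f : X -> X) (p : X) : set X :=
  [set iter j f p | j in [set: nat]].

(* Main.v *)
Require Import Defs.
From HB Require Import structures.
From mathcomp Require Import all_boot all_order all_algebra.
From mathcomp Require Import all_classical all_reals all_analysis.
Import Order.TTheory GRing.Theory Num.Theory.
Local Open Scope classical_set_scope.
Local Open Scope ring_scope.
Section Aux.
Context {R : realType} {X : metricType R} {N : nat} {Xi : 'I_N -> set X} {f : X -> X}.

Lemma Fmap_mono i A B : A `<=` B -> Fmap Xi f i A `<=` Fmap Xi f i B.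
Proof.
move=> AB; apply: closureS => _ [x [Ax Xx] <-]; exists x => //; split => //; exact: AB.
Qed.

Lemma foldl_mono s A B : A `<=` B ->
  foldl (fun A i => Fmap Xi f i A) A s `<=` foldl (fun A i => Fmap Xi f i A) B s.
Proof. elim: s A B => //= i s IH A B AB; apply: IH; exact: Fmap_mono. Qed.

Lemma atom_cons i s : atom Xi f (i :: s) `<=` atom Xi f s.
Proof. rewrite /atom /=; exact: foldl_mono. Qed.

Lemma atom_rcons s i : atom Xi f (rcons s i) = Fmap Xi f i (atom Xi f s).
Proof. by rewrite /atom foldl_rcons. Qed.

Lemma L0 x : Lambda_n Xi f 0 x.
Proof. by exists [::]. Qed.

Lemma L_S n : Lambda_n Xi f n.+1 `<=` Lambda_n Xi f n.
Proof.
move=> x [[|i s] /= Hs Hx] //; exists s; first by case: Hs.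
apply: atom_cons; exact: Hx.
Qed.

Lemma L_mono m n : (m <= n)%N -> Lambda_n Xi f n `<=` Lambda_n Xi f m.
Proof.
move=> mn; rewrite -(subnK mn); elim: (n - m)%N => // k IH; rewrite addSn.
exact: subset_trans (@L_S _) IH.
Qed.

Lemma atom_closed s : closed (atom Xi f s).
Proof.
case/lastP: s => [|s i]; first exact: closedT.
rewrite atom_rcons; exact: closed_closure.
Qed.

Lemma L_closed n : closed (Lambda_n Xi f n).
Proof.
apply: closed_bigcup => [|s _]; last exact: atom_closed.
have -> : [set s : seq 'I_N | size s = n] = (fun t : n.-tuple 'I_N => tval t) @` setT.
  apply/seteqP; split => [s /= Hs|_ [t _ <-]]; last exact: size_tuple.
  by exists (@Tuple n _ s (introT eqP Hs)).
apply: finite_image; exact: finite_finset.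
Qed.

Lemma Lam_closed : closed (attractor Xi f).
Proof. apply: closed_bigI => n _; exact: L_closed. Qed.

Lemma closure_mdist (A : set X) x e : closure A x -> 0 < e -> exists2 z, A z & mdist x z < e.
Proof.
move=> cAx e0; have [z [Az bz]] := cAx _ (nbhsx_ballx x e e0).
by exists z => //; move: bz; rewrite ballEmdist.
Qed.

Lemma mdist_closure (A : set X) x : (forall e, 0 < e -> exists2 z, A z & mdist x z < e) -> closure A x.
Proof.
move=> H B /nbhs_ballP [e e0 sB]; have [z Az dz] := H e e0.
exists z; split => //; apply: sB; by rewrite ballEmdist.
Qed.

Lemma seq_cluster (y : nat -> X) : compact [set: X] ->
  exists p, forall r, 0 < r -> forall n0, exists2 n, (n0 <= n)%N & mdist p (y n) < r.
Proof.
move=> cX; have [p [_ cp]] := cX (y @ \oo) _ filterT.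
exists p => r r0 n0.
have [z [[n Hn ->] bz]] := cp [set z | exists2 n, (n0 <= n)%N & z = y n] (ball p r)
   (ex_intro2 _ _ n0 I (fun n Hn => ex_intro2 _ _ n Hn erefl)) (nbhsx_ballx p r r0).
by exists n => //; move: bz; rewrite ballEmdist.
Qed.

End Aux.
Lemma invS_lt {R : realType} {e : R} : 0 < e -> exists N, forall n, (N <= n)%N -> n.+1%:R^-1 < e.
Proof.
move=> e0; have [N _ HN] := near_infty_natSinv_lt (PosNum e0).
by exists N => n Nn; exact: HN.
Qed.

Lemma open_ball_sub {R : realType} {X : metricType R} {A : set X} {x : X} :
  open A -> A x -> exists2 r, 0 < r & forall y, mdist x y < r -> A y.
Proof.
move=> oA Ax; have /nbhs_ballP [r r0 sr] := @open_nbhs_nbhs _ x A (conj oA Ax).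
by exists r => // y dy; apply: sr; rewrite ballEmdist.
Qed.

Section Main.
Context {R : realType} {X : metricType R} (N : nat) (Xi : 'I_N -> set X) (f : X -> X)
  (lam : R) (cX : compact [set: X]) (oX : forall i, open (Xi i))
  (l0 : 0 < lam) (l1 : lam < 1)
  (contr : forall i x y, Xi i x -> Xi i y -> mdist (f x) (f y) <= lam * mdist x y)
  (inX : forall x, attractor Xi f x -> exists i, Xi i x).

Local Notation Lam := (attractor Xi f).

Lemma Lam_f x : Lam x -> Lam (f x).
Proof.
move=> Lx; have [i Xx] := inX _ Lx.
move=> m /= m0.
have Lm : Lambda_n Xi f m.-1 x.
  by case: m m0 => // -[|m] _ /=; [exact: L0 | apply: Lx].
case: Lm => s Hs Ax; exists (rcons s i).
  by rewrite /= size_rcons Hs prednK.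
rewrite atom_rcons; apply: subset_closure; by exists x.
Qed.

Lemma Lam_iter k x : Lam x -> Lam (iter k f x).
Proof. by move=> Lx; elim: k => //= k IH; exact: Lam_f. Qed.

Lemma Lam_surj x : Lam x -> exists2 y, Lam y & f y = x.
Proof.
move=> Lx.
have H n : exists y, Lambda_n Xi f n y /\ mdist x (f y) < n.+1%:R^-1.
  have [s Hs Ax] := Lx n.+1 (ltn0Sn n).
  move: Hs Ax; case/lastP: s => [//|s i]; rewrite /= size_rcons => -[Hs]; rewrite atom_rcons.
  have e0 : 0 < n.+1%:R^-1 :> R by rewrite invr_gt0 ltr0n.
  move=> /closure_mdist /(_ e0) [].
  move=> _ [y [Ay Xy] <-] d; exists y; split => //; by exists s.
have [y Hy] := choice H.
have [p Hp] := seq_cluster y cX.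
have Lp : Lam p.
  move=> m _; apply: (L_closed m); apply: mdist_closure => e e0.
  have [n Hn d] := Hp e e0 m; exists (y n) => //.
  have [Ln _] := Hy n; move: Ln; apply: L_mono; exact: Hn.
exists p => //.
have [k Xp] := inX _ Lp.
have [r r0 sr] := open_ball_sub (oX k) Xp.
suff Hd : forall e, 0 < e -> mdist (f p) x < e.
  apply: mdist_positivity; apply/eqP; rewrite eq_le mdist_ge0 andbT leNgt; apply/negP => d0.
  by have := Hd _ d0; rewrite ltxx.
move=> e e0.
have e20 : 0 < e / 2 by rewrite divr_gt0.
have [n0 Hn0] := invS_lt e20.
have mr0 : 0 < Num.min r (e/2) by rewrite lt_min r0 e20.
have m1 : Num.min r (e/2) <= r by rewrite ge_min lexx.
have m2 : Num.min r (e/2) <= e/2 by rewrite ge_min lexx orbT.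
have [n Hn d] := Hp _ mr0 n0.
have [_ dn] := Hy n.
have Xyn : Xi k (y n) by apply: sr; exact: lt_le_trans d m1.
have c := contr _ _ _ Xp Xyn.
rewrite (le_lt_trans (metric_triangle _ (f (y n)) _)) // [X in _ < X](splitr e) ltrD //.
  apply: le_lt_trans c _; apply: le_lt_trans (lt_le_trans d m2).
  by rewrite ler_piMl ?mdist_ge0 // ltW.
by rewrite metric_sym; apply: lt_trans dn _; exact: Hn0.
Qed.

Lemma Lam_surj_iter k x : Lam x -> exists2 y, Lam y & iter k f y = x.
Proof.
elim: k x => [|k IH] x Lx; first by exists x.
have [y Ly <-] := IH _ Lx; have [z Lz <-] := Lam_surj _ Ly.
by exists z => //; rewrite iterSr.
Qed.


Lemma sep : exists2 del, 0 < del & forall u v, Lam u -> Lam v -> mdist u v < del ->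
  exists i, Xi i u /\ Xi i v.
Proof.
apply: contrapT => H.
have Hn n : exists w : X * X, [/\ Lam w.1, Lam w.2, mdist w.1 w.2 < n.+1%:R^-1 &
    ~ exists i, Xi i w.1 /\ Xi i w.2].
  apply: contrapT => Hno; apply: H; exists n.+1%:R^-1; first by rewrite invr_gt0 ltr0n.
  move=> u v Lu Lv d; apply: contrapT => Hni; apply: Hno; by exists (u, v).
have [w Hw] := choice Hn.
have [p Hp] := seq_cluster (fun n => (w n).1) cX.
have Lp : Lam p.
  apply: Lam_closed; apply: mdist_closure => e e0.
  have [n _ d] := Hp e e0 0%N; exists (w n).1 => //; by case: (Hw n).
have [k Xp] := inX _ Lp.
have [r r0 sr] := open_ball_sub (oX k) Xp.
have r20 : 0 < r / 2 by rewrite divr_gt0.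
have [n0 Hn0] := invS_lt r20.
have [n Hnn d] := Hp _ r20 n0.
case: (Hw n) => _ _ dn; apply; exists k; split.
  by apply: sr; apply: lt_trans d _; rewrite ltr_pdivrMr // ltr_pMr // ltr1n.
apply: sr; apply: le_lt_trans (metric_triangle _ (w n).1 _) _.
by rewrite [X in _ < X](splitr r) ltrD //; apply: lt_trans dn _; exact: Hn0 Hnn.
Qed.

Lemma iter_contr del : (forall u v, Lam u -> Lam v -> mdist u v < del ->
  exists i, Xi i u /\ Xi i v) ->
  forall k u v, Lam u -> Lam v -> mdist u v < del ->
  mdist (iter k f u) (iter k f v) <= lam ^+ k * mdist u v.
Proof.
move=> Hsep k u v Lu Lv d; elim: k => [|k IH]; first by rewrite expr0 mul1r.
have dk : mdist (iter k f u) (iter k f v) < del.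
  apply: le_lt_trans IH _; apply: le_lt_trans d.
  by rewrite ler_piMl ?mdist_ge0 // exprn_ile1 // ltW.
have [i [Xu Xv]] := Hsep _ _ (Lam_iter k _ Lu) (Lam_iter k _ Lv) dk.
rewrite /= exprS -mulrA; apply: le_trans (contr _ _ _ Xu Xv) _.
by rewrite ler_pM2l.
Qed.

Lemma cover_Lam del : 0 < del -> exists cs : seq X,
  forall u, Lam u -> exists2 c, c \in cs & mdist c u < del.
Proof.
move=> d0; apply: contrapT => H.
have Hg (cs : seq X) : exists u, Lam u /\ forall c, c \in cs -> del <= mdist c u.
  apply: contrapT => Hno; apply: H; exists cs => u Lu.
  apply: contrapT => Hc; apply: Hno; exists u; split => // c cin.
  rewrite leNgt; apply/negP => dc; apply: Hc; by exists c.
have [g Hgg] := choice Hg.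
pose Ls := fix Ls n := if n is n'.+1 then g (Ls n') :: Ls n' else [::].
pose x n := g (Ls n).
have mem n m : (n < m)%N -> x n \in Ls m.
  elim: m => // m IH; rewrite ltnS leq_eqVlt => /orP [/eqP ->|/IH Hn]; rewrite /= inE.
    by rewrite eqxx.
  by rewrite Hn orbT.
have [p Hp] := seq_cluster x cX.
have d20 : 0 < del / 2 by rewrite divr_gt0.
have [n _ dn] := Hp _ d20 0%N.
have [m nm dm] := Hp _ d20 n.+1.
have [_ Hm] := Hgg (Ls m).
have := Hm _ (mem _ _ nm); rewrite leNgt => /negP; apply.
apply: le_lt_trans (metric_triangle _ p _) _.
by rewrite [X in _ < X](splitr del) ltrD // metric_sym.
Qed.


Lemma Lam_bound : exists M, forall t : seq X, uniq t -> (forall x, x \in t -> Lam x) ->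
  (size t <= M)%N.
Proof.
have [del d0 Hsep] := sep.
have d20 : 0 < del / 2 by rewrite divr_gt0.
have [cs Hcs] := cover_Lam _ d20.
exists (size cs) => t ut tL.
rewrite leqNgt; apply/negP => Hlt.
have [x0 _] : exists x, x \in t.
  by move: Hlt; case: (t) => [//|x s _]; exists x; rewrite inE eqxx.
pose n := size t.
pose T (a : 'I_n) := nth x0 t a.
have HK : \forall k \near \oo, forall q : 'I_n * 'I_n, q.1 != q.2 ->
    lam ^+ k * del < mdist (T q.1) (T q.2).
  apply: filter_forall => -[a b] /=; case: (eqVneq a b) => [-> | ne].
    by apply: nearW.
  have dpos : 0 < mdist (T a) (T b).
    by rewrite mdist_gt0 /T nth_uniq // ?ltn_ord.
  have : `|lam| < 1 by rewrite ger0_norm // ltW.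
  move=> /cvg_expr /cvgr0Pnorm_lt /(_ (mdist (T a) (T b) / del)).
  rewrite divr_gt0 // => /(_ isT); apply: filterS => k Hk _.
  rewrite -ltr_pdivlMr //; apply: le_lt_trans Hk; exact: ler_norm.
case: HK => K _ HK.
have HKK := HK K (leqnn K).
have Hpick (a : 'I_n) : exists j : 'I_(size cs) * X,
    [/\ Lam j.2, iter K f j.2 = T a & mdist (nth x0 cs j.1) j.2 < del / 2].
  have LT : Lam (T a) by apply: tL; rewrite mem_nth.
  have [u Lu Hu] := Lam_surj_iter K _ LT.
  have [c cin dc] := Hcs u Lu.
  have ic : (index c cs < size cs)%N by rewrite index_mem.
  by exists (Ordinal ic, u); split => //=; rewrite nth_index.
have [G HG] := choice Hpick.
have [a [b [ab gab]]] : exists a b, a != b /\ (G a).1 = (G b).1.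
  apply: contrapT => Hn.
  have inj : injective (fun a => (G a).1).
    move=> a b gab; apply/eqP; apply: contrapT => /negP ab; apply: Hn; exists a, b; split => //.
  have := leq_card _ inj; rewrite !card_ord => Hle.
  by have := leq_trans Hlt Hle; rewrite ltnn.
case: (HG a) => La Ha da; case: (HG b) => Lb Hb db.
have duv : mdist (G a).2 (G b).2 < del.
  apply: le_lt_trans (metric_triangle _ (nth x0 cs (G a).1) _) _.
  rewrite [X in _ < X](splitr del) ltrD //; first by rewrite metric_sym.
  by rewrite gab.
have := @iter_contr del Hsep K _ _ La Lb duv; rewrite Ha Hb => Hc.
have Hk := HKK (a, b) ab.
have H2 : lam ^+ K * mdist (G a).2 (G b).2 <= lam ^+ K * del.
  by rewrite ler_pM2l ?exprn_gt0 // ltW.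
by have := lt_le_trans Hk (le_trans Hc H2); rewrite ltxx.
Qed.

End Main.

Theorem theorem3 (R : realType) (X : metricType R) (N : nat)
  (Xi : 'I_N -> set X) (f : X -> X) (lambda : R) :
  compact [set: X] ->
  locally_connected X ->
  piecewise_contracting Xi f lambda ->
  (Delta Xi = set0 \/ set_dist (attractor Xi f) (Delta Xi) != 0) ->
  exists (m : nat) (p : 'I_m -> X),
    (forall k, periodic_pt f (p k)) /\
    attractor Xi f = \bigcup_(k in [set: 'I_m]) fwd_orbit f (p k).
Proof.
move=> cX _ [_ [_ [oX [_ [_ [/andP[l0 l1] [contr _]]]]]]] HD.
have inX : forall x, attractor Xi f x -> exists i, Xi i x.
  move=> x Lx; have nD : ~ Delta Xi x.
    move=> Dx; case: HD => [D0|/eqP Hd]; first by rewrite D0 in Dx.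
    apply: Hd.
    have lb : lbound [set mdist a b | a in attractor Xi f & b in Delta Xi] 0.
      by move=> _ [a _ [b _ <-]]; exact: mdist_ge0.
    have E0 : [set mdist a b | a in attractor Xi f & b in Delta Xi] 0.
      by exists x => //; exists x => //; exact: mdistxx.
    rewrite /set_dist; apply/eqP; rewrite eq_le (lb_le_inf _ lb) ?andbT; last by exists 0.
    exact: ge_inf (ex_intro _ 0 lb) _ E0.
  move: nD; rewrite /Delta /= => /contrapT [i _ Xx]; by exists i.
have [M HM] := Lam_bound _ _ _ _ cX oX l0 l1 contr inX.
pose P n := `[< exists t : seq X, [/\ uniq t, (forall x, x \in t -> attractor Xi f x) &
   size t = n] >].
have P0 : exists n, P n by exists 0%N; apply/asboolP; exists [::].
have Pb : forall n, P n -> (n <= M)%N by move=> n /asboolP [t [ut tL <-]]; exact: HM.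
case: (ex_maxnP P0 Pb) => n /asboolP [s [us sL sn]] smax.
have Ls : forall x, attractor Xi f x -> x \in s.
  move=> x Lx; apply: contrapT => /negP xs.
  suff : P n.+1 by move/smax; rewrite ltnn.
  apply/asboolP; exists (x :: s); split => /=; first by rewrite xs.
    by move=> y; rewrite inE => /orP [/eqP ->|/sL].
  by rewrite sn.
have fs : forall x, x \in s -> f x \in s.
  by move=> x /sL Lx; apply: Ls; exact: (Lam_f _ _ _ inX _ Lx).
have sub : {subset s <= map f s}.
  move=> x /sL Lx; have [y Ly <-] := Lam_surj _ _ _ _ cX oX l1 contr inX _ Lx.
  apply: map_f; exact: Ls.
have umap : uniq (map f s) by apply: leq_size_uniq us sub _; rewrite size_map.
have finj : {in s &, injective f}.
  move=> x y xs ys fxy.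
  rewrite -(nth_index x xs) -(nth_index x ys); congr nth; apply/eqP.
  have ix : (index x s < size (map f s))%N by rewrite size_map index_mem.
  have iy : (index y s < size (map f s))%N by rewrite size_map index_mem.
  rewrite -(nth_uniq (f x) ix iy umap) !(nth_map x) ?index_mem // !nth_index //.
  by rewrite fxy.
have per : forall x, x \in s -> periodic_pt f x.
  move=> x xs.
  have its j : iter j f x \in s by elim: j => //= j IH; exact: fs.
  have canc : forall i d, iter (i + d) f x = iter i f x -> iter d f x = x.
    elim=> [|i IH] d; first by rewrite add0n.
    rewrite addSn /= => H; apply: IH.
    exact: (finj _ _ (its _) (its _) H).
  pose L := [seq iter j f x | j <- iota 0 (size s).+1].
  have : ~~ uniq L.
    apply/negP => uL.
    have sL' : {subset L <= s} by move=> _ /mapP [j _ ->]; exact: its.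
    by have := uniq_leq_size uL sL'; rewrite size_map size_iota ltnn.
  case/(uniqPn x) => i [j [ij jL Heq]].
  move: jL Heq; rewrite size_map size_iota => jL.
  have iL : (i < (size s).+1)%N by apply: ltn_trans ij jL.
  rewrite !(nth_map 0%N) ?size_iota // !nth_iota // !add0n => Heq.
  exists (j - i)%N; split; first by rewrite subn_gt0.
  apply: (canc i); rewrite subnKC; [by rewrite Heq | exact: ltnW].
exists (size s), (fun k => tnth (in_tuple s) k); split.
  move=> k; apply: per; exact: mem_tnth.
apply/seteqP; split => [x Lx|_ [k _ [j _ <-]]].
  have xs := Ls _ Lx.
  have ix : (index x s < size s)%N by rewrite index_mem.
  exists (Ordinal ix) => //; exists 0%N => //=.
  by rewrite (tnth_nth x) /= nth_index.
apply: (Lam_iter _ _ _ inX); apply: sL; exact: mem_tnth.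
Qed.
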